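(* Let $\epsilon\ge0$ and let $\mathcal A\in\mathrm{LDP}_\epsilon$. Then \[ \eta_{\mathrm{Tr}}(\mathcal A)\le\frac{e^\epsilon-1}{e^\epsilon+1}. \]
   Context: All Hilbert spaces are finite-dimensional. $E_\gamma(\rho\|\sigma)=\mathrm{Tr}(\rho-\gamma\sigma)_+$. A quantum channel (CPTP map) $\mathcal A$ from operators on $H_A$ to operators on $H_B$ is in $\mathrm{LDP}_\epsilon$ if $E_{e^\epsilon}(\mathcal A(\rho)\|\mathcal A(\sigma))=0$ for all states $\rho,\sigma$ on $H_A$. The trace-distance contraction coefficient is $\eta_{\mathrm{Tr}}(\mathcal A)=\sup_{\rho\ne\sigma}\frac{\|\mathcal A(\rho)-\mathcal A(\sigma)\|_1}{\|\rho-\sigma\|_1}$, the supremum over distinct states on $H_A$. *)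

(* Defs.v *)
From HB Require Import structures.
From mathcomp Require Import all_boot all_order all_algebra.
From mathcomp Require Import spectral.
From mathcomp Require Import classical_sets reals.
From mathcomp Require Import sequences exp.
From mathcomp.real_closed Require Import complex mxtens.

Set Implicit Arguments.
Unset Strict Implicit.
Unset Printing Implicit Defensive.

Import Order.TTheory GRing.Theory Num.Theory.
Local Open Scope ring_scope.

Section Quantum.
Variable R : realType.
Local Notation C := (R[i]).

Definition adjmx p q (M : 'M[C]_(p, q)) : 'M[C]_(q, p) := (map_mx Num.conj M)^T.

Definition psdmx n (X : 'M[C]_n) : Prop :=
  forall v : 'rV[C]_n, 0 <= (v *m X *m adjmx v) 0 0.

Definition is_state n (rho : 'M[C]_n) : Prop := psdmx rho /\ \tr rho = 1.

(* operators on C^k (x) C^n are k*n square matrices; block (i,j) of X *)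
Definition blockmx k n (X : 'M[C]_(k * n)) (i j : 'I_k) : 'M[C]_n :=
  \matrix_(a, b) X (mxtens_index (i, a)) (mxtens_index (j, b)).

(* the amplification id_k (x) A *)
Definition ampl k n m (A : 'M[C]_n -> 'M[C]_m) (X : 'M[C]_(k * n)) : 'M[C]_(k * m) :=
  \matrix_(p, q) A (blockmx X (mxtens_unindex p).1 (mxtens_unindex q).1)
                   (mxtens_unindex p).2 (mxtens_unindex q).2.

Definition is_channel n m (A : 'M[C]_n -> 'M[C]_m) : Prop :=
  [/\ (forall (a : C) (X Y : 'M[C]_n), A (a *: X + Y) = a *: A X + A Y),
      (forall (k : nat) (X : 'M[C]_(k * n)), psdmx X -> psdmx (ampl A X)) &
      (forall X : 'M[C]_n, \tr (A X) = \tr X)].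

(* eigenvalues (with multiplicity) of a normal matrix, via the spectral theorem
   X = U^-1 diag(spectral_diag X) U *)
Definition eigvals n (X : 'M[C]_n) : 'rV[C]_n := spectral_diag X.

Definition trpos n (X : 'M[C]_n) : R :=
  \sum_(i < n) Num.max (complex.Re (eigvals X 0 i)) 0.

Definition trnorm n (X : 'M[C]_n) : R :=
  \sum_(i < n) Num.sqrt (complex.Re (eigvals (adjmx X *m X) 0 i)).

Definition Egamma n (gamma : R) (rho sigma : 'M[C]_n) : R :=
  trpos (rho - (gamma%:C)%C *: sigma).

Definition is_LDP n m (eps : R) (A : 'M[C]_n -> 'M[C]_m) : Prop :=
  forall rho sigma : 'M[C]_n, is_state rho -> is_state sigma ->
    Egamma (expR eps) (A rho) (A sigma) = 0.

Definition eta_tr n m (A : 'M[C]_n -> 'M[C]_m) : R :=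
  sup [set r : R | exists rho sigma : 'M[C]_n,
        [/\ is_state rho, is_state sigma, rho <> sigma &
            r = trnorm (A rho - A sigma) / trnorm (rho - sigma)]].

End Quantum.

(* Main.v *)
Require Import Defs.
From HB Require Import structures.
From mathcomp Require Import all_boot all_order all_algebra spectral sesquilinear.
From mathcomp Require Import classical_sets reals ring lra.
From mathcomp Require Import sequences exp.
From mathcomp.real_closed Require Import complex mxtens.
Import Order.TTheory GRing.Theory Num.Theory.
Local Open Scope ring_scope.
Set Implicit Arguments.
Unset Strict Implicit.
Unset Printing Implicit Defensive.
Section S.
Variable R : realType.
Local Notation C := (R[i]).

Lemma adjE p q (M : 'M[C]_(p,q)) : adjmx M = (M ^t* )%sesqui.
Proof. by rewrite /adjmx map_trmx. Qed.

Lemma adjmxK p q (M : 'M[C]_(p,q)) : adjmx (adjmx M) = M.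
Proof. by apply/matrixP=> i j; rewrite !mxE conjCK. Qed.

Lemma adjmx_mul p q r (A : 'M[C]_(p,q)) (B : 'M[C]_(q,r)) :
  adjmx (A *m B) = adjmx B *m adjmx A.
Proof. by rewrite /adjmx map_mxM trmx_mul. Qed.

Lemma adjmxD p q (A B : 'M[C]_(p,q)) : adjmx (A + B) = adjmx A + adjmx B.
Proof. by apply/matrixP=> i j; rewrite !mxE rmorphD. Qed.

Lemma adjmxN p q (A : 'M[C]_(p,q)) : adjmx (- A) = - adjmx A.
Proof. by apply/matrixP=> i j; rewrite !mxE rmorphN. Qed.

Lemma adjmxB p q (A B : 'M[C]_(p,q)) : adjmx (A - B) = adjmx A - adjmx B.
Proof. by rewrite adjmxD adjmxN. Qed.

Lemma adjmxZ p q a (A : 'M[C]_(p,q)) : adjmx (a *: A) = a^* *: adjmx A.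
Proof. by apply/matrixP=> i j; rewrite !mxE rmorphM. Qed.

Lemma adjmx1 p : adjmx (1%:M : 'M[C]_p) = 1%:M.
Proof. by rewrite /adjmx map_mx1 trmx1. Qed.

Lemma adjmx_diag p (d : 'rV[C]_p) : adjmx (diag_mx d) = diag_mx (map_mx Num.conj d).
Proof. by rewrite /adjmx map_diag_mx tr_diag_mx. Qed.

Lemma adjmxE p q (A : 'M[C]_(p,q)) i j : adjmx A i j = (A j i)^*.
Proof. by rewrite !mxE. Qed.


Definition sesq {n} (X : 'M[C]_n) (u w : 'rV[C]_n) := (u *m X *m adjmx w) 0 0.

Lemma sesqDl n X (u u' w : 'rV[C]_n) : sesq X (u + u') w = sesq X u w + sesq X u' w.
Proof. by rewrite /sesq !mulmxDl mxE. Qed.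
Lemma sesqDr n X (u w w' : 'rV[C]_n) : sesq X u (w + w') = sesq X u w + sesq X u w'.
Proof. by rewrite /sesq adjmxD mulmxDr mxE. Qed.
Lemma sesqZl n X a (u w : 'rV[C]_n) : sesq X (a *: u) w = a * sesq X u w.
Proof. by rewrite /sesq -!scalemxAl mxE. Qed.
Lemma sesqZr n X a (u w : 'rV[C]_n) : sesq X u (a *: w) = a^* * sesq X u w.
Proof. by rewrite /sesq adjmxZ -scalemxAr mxE. Qed.
Lemma sesq_delta n (X : 'M[C]_n) i j : sesq X (delta_mx 0 i) (delta_mx 0 j) = X i j.
Proof.
rewrite /sesq -rowE.
have -> : adjmx (delta_mx 0 j : 'rV[C]_n) = delta_mx j 0.
  by apply/matrixP=> a b; rewrite !mxE; case: eqP; case: eqP => //= *; rewrite ?conjC1 ?conjC0.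
by rewrite -colE !mxE.
Qed.

Lemma psd_real {n} {X : 'M[C]_n} u : psdmx X -> sesq X u u \is Num.real.
Proof. by move=> /(_ u) /ger0_real. Qed.

Lemma real_conj (z : C) : z \is Num.real -> z^* = z.
Proof. by move/CrealP. Qed.

Lemma psd_herm n (X : 'M[C]_n) : psdmx X -> adjmx X = X.
Proof.
move=> pX; apply/matrixP=> i j; rewrite adjmxE.
set ei := delta_mx 0 i : 'rV[C]_n; set ej := delta_mx 0 j : 'rV[C]_n.
have /real_conj h1 := psd_real (ei + ej) pX.
have /real_conj h2 := psd_real (ei + 'i *: ej) pX.
have /real_conj hi := psd_real ei pX; have /real_conj hj := psd_real ej pX.
rewrite !(sesqDl, sesqDr, sesqZl, sesqZr) !sesq_delta in h1 h2.
rewrite !sesq_delta in hi hj.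
rewrite !(rmorphD, rmorphM) /= !conjCK conjCi hi hj in h1 h2.
move/eqP: h1; rewrite -subr_eq0 => /eqP h1.
move/eqP: h2; rewrite -subr_eq0 => /eqP h2.
apply/eqP; rewrite -subr_eq0; apply/eqP.
have nz : (2 * 'i : C) != 0 by rewrite mulf_neq0 ?neq0Ci ?pnatr_eq0.
apply: (mulfI nz); have := congr2 (fun a b => 'i * a - b) h1 h2.
rewrite /= mulr0 subr0 mulr0 => <-; ring.
Qed.
Lemma realC (z : C) : z \is Num.real -> z = ((complex.Re z)%:C)%C.
Proof.
case: z => a b; rewrite realE !lecE /= => /orP[] /andP[/eqP hb _]; apply/eqP; rewrite eq_complex /= eqxx /=; apply/eqP; lra.
Qed.

Lemma spec_herm n (H : 'M[C]_n) : adjmx H = H ->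
  [/\ H = adjmx (spectralmx H) *m diag_mx (eigvals H) *m spectralmx H,
      spectralmx H *m adjmx (spectralmx H) = 1%:M,
      adjmx (spectralmx H) *m spectralmx H = 1%:M &
      forall i, eigvals H 0 i = ((complex.Re (eigvals H 0 i))%:C)%C].
Proof.
move=> hH.
have Hn : H \is normalmx by apply/normalmxP; rewrite -adjE hH.
have Pu := spectral_unitarymx H.
have Hh : H \is hermsymmx by apply/is_hermitianmxP; rewrite expr0 scale1r -adjE hH.
have /mxOverP re := hermitian_spectral_diag_real Hh.
split.
- by rewrite adjE -invmx_unitary //; apply/orthomx_spectralP.
- by rewrite adjE; apply/unitarymxP.
- by rewrite adjE -invmx_unitary // mulVmx // spectral_unit.
- by move=> i; apply: realC; apply: re.
Qed.
Definition rv {n} (r : 'I_n -> R) : 'rV[C]_n := \row_i ((r i)%:C)%C.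

Definition mk {n} (P : 'M[C]_n) (r : 'I_n -> R) :=
  adjmx P *m diag_mx (rv r) *m P.

Lemma ReD (x y : C) : complex.Re (x + y) = complex.Re x + complex.Re y.
Proof. by case: x; case: y. Qed.
Lemma ReN (x : C) : complex.Re (- x) = - complex.Re x.
Proof. by case: x. Qed.
Lemma ReB (x y : C) : complex.Re (x - y) = complex.Re x - complex.Re y.
Proof. by rewrite ReD ReN. Qed.
Lemma ReRM (c : R) (x : C) : complex.Re ((c%:C)%C * x) = c * complex.Re x.
Proof. by case: x => a b /=; rewrite mul0r subr0. Qed.
Lemma ReR (c : R) : complex.Re ((c%:C)%C : C) = c.
Proof. by []. Qed.
Lemma Re_sum I (s : seq I) (F : I -> C) :
  complex.Re (\sum_(i <- s) F i) = \sum_(i <- s) complex.Re (F i).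
Proof.
elim: s => [|x s IH]; first by rewrite !big_nil.
by rewrite !big_cons ReD IH.
Qed.
Lemma RC_sum I (s : seq I) (F : I -> R) :
  ((\sum_(i <- s) F i)%:C)%C = \sum_(i <- s) ((F i)%:C)%C :> C.
Proof.
exact: (rmorph_sum (real_complex R)).
Qed.
Lemma Re_le0 (z : C) : z <= 0 -> complex.Re z <= 0.
Proof. by case: z => a b; rewrite lecE /= => /andP[]. Qed.
Lemma Re_ge0 (z : C) : 0 <= z -> 0 <= complex.Re z.
Proof. by case: z => a b; rewrite lecE /= => /andP[]. Qed.

Section Mk.
Variables (n : nat) (P : 'M[C]_n).
Hypotheses (hP1 : P *m adjmx P = 1%:M) (hP2 : adjmx P *m P = 1%:M).

Lemma mk_tr r : \tr (mk P r) = ((\sum_i r i)%:C)%C.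
Proof.
rewrite /mk mxtrace_mulC mulmxA hP1 mul1mx mxtrace_diag RC_sum.
by apply: eq_bigr => i _; rewrite mxE.
Qed.

Lemma mk_mul r s : mk P r *m mk P s = mk P (fun i => r i * s i).
Proof.
rewrite /mk !mulmxA -[_ *m P *m adjmx P]mulmxA hP1 mulmx1 -[_ *m diag_mx _ *m diag_mx _]mulmxA mulmx_diag.
by congr (_ *m diag_mx _ *m _); apply/matrixP => i j; rewrite !mxE rmorphM.
Qed.

Lemma mk_add r s : mk P r + mk P s = mk P (fun i => r i + s i).
Proof.
rewrite /mk -mulmxDl -mulmxDr -raddfD /=.
by congr (_ *m diag_mx _ *m _); apply/matrixP => i j; rewrite !mxE rmorphD.
Qed.

Lemma mk_opp r : - mk P r = mk P (fun i => - r i).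
Proof.
rewrite /mk -mulNmx -mulmxN -raddfN /=.
by congr (_ *m diag_mx _ *m _); apply/matrixP => i j; rewrite !mxE rmorphN.
Qed.

Lemma mk_scale c r : (c%:C)%C *: mk P r = mk P (fun i => c * r i).
Proof.
rewrite /mk scalemxAl scalemxAr -linearZ /=.
by congr (_ *m diag_mx _ *m _); apply/matrixP => i j; rewrite !mxE rmorphM.
Qed.

Lemma mk_one : mk P (fun _ => 1) = 1%:M.
Proof.
rewrite /mk.
have -> : diag_mx (rv (fun _ : 'I_n => 1)) = 1%:M.
  by rewrite -diag_const_mx; congr diag_mx; apply/matrixP => i j; rewrite !mxE.
by rewrite mulmx1 hP2.
Qed.

Lemma diag_sesq (w u : 'rV[C]_n) (d : 'rV[C]_n) :
  (w *m diag_mx d *m adjmx u) 0 0 = \sum_i w 0 i * d 0 i * (u 0 i)^*.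
Proof.
rewrite mul_mx_diag mxE; apply: eq_bigr => i _; rewrite !mxE //.
Qed.

Lemma mk_psd r : (forall i, 0 <= r i) -> psdmx (mk P r).
Proof.
move=> hr v; rewrite /mk.
have -> : v *m (adjmx P *m diag_mx (rv r) *m P) *m adjmx v =
   (v *m adjmx P) *m diag_mx (rv r) *m adjmx (v *m adjmx P).
  by rewrite adjmx_mul adjmxK !mulmxA.
rewrite diag_sesq; apply: sumr_ge0 => i _.
rewrite mxE mulrAC; apply: mulr_ge0; first exact: mul_conjC_ge0.
by rewrite /rv mxE lecE /= eqxx hr.
Qed.

Lemma sesq_row (M : 'M[C]_n) i :
  sesq M (row i P) (row i P) = (P *m M *m adjmx P) i i.
Proof.
rewrite /sesq !mxE; apply: eq_bigr => k _; rewrite !mxE; congr (_ * _).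
by apply: eq_bigr => j _; rewrite !mxE.
Qed.

Lemma tr_mul_mk (M : 'M[C]_n) r :
  \tr (M *m mk P r) = \sum_i sesq M (row i P) (row i P) * ((r i)%:C)%C.
Proof.
rewrite /mk !mulmxA mxtrace_mulC !mulmxA mul_mx_diag /mxtrace.
by apply: eq_bigr => i _; rewrite sesq_row [LHS]mxE /rv [X in _ * X]mxE.
Qed.

Lemma char_poly_mk r :
  char_poly (mk P r) = \prod_i ('X - (((r i)%:C)%C)%:P).
Proof.
have hcpm : char_poly_mx (mk P r) =
    map_mx polyC (adjmx P) *m char_poly_mx (diag_mx (rv r)) *m map_mx polyC P.
  rewrite /char_poly_mx /mk !map_mxM mulmxBr mulmxBl; congr (_ - _).
  by rewrite scalar_mxC -mulmxA -map_mxM hP2 map_mx1 mulmx1.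
rewrite /char_poly hcpm !det_mulmx mulrC mulrA -det_mulmx -map_mxM hP1.
rewrite map_mx1 det1 mul1r -/(char_poly _) char_poly_trig ?diag_mx_is_trig //.
by apply: eq_bigr => i _; rewrite !mxE eqxx mulr1n.
Qed.
End Mk.

Lemma herm_mk n (H : 'M[C]_n) : adjmx H = H ->
  let P := spectralmx H in
  [/\ H = mk P (fun i => complex.Re (eigvals H 0 i)),
      P *m adjmx P = 1%:M & adjmx P *m P = 1%:M].
Proof.
move=> /spec_herm [e1 e2 e3 e4]; split => //.
rewrite {1}e1 /mk; congr (_ *m diag_mx _ *m _).
by apply/matrixP => i j; rewrite !mxE ord1 -e4.
Qed.

Lemma trpos_mk n (H : 'M[C]_n) :
  trpos H = \sum_i Num.max (complex.Re (eigvals H 0 i)) 0.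
Proof. by []. Qed.

Lemma trnorm_herm n (H : 'M[C]_n) : adjmx H = H ->
  trnorm H = \sum_i `| complex.Re (eigvals H 0 i) |.
Proof.
move=> hH; have [eH u1 u2] := herm_mk hH.
set r := fun i => complex.Re (eigvals H 0 i) in eH.
set G := adjmx H *m H.
have hG : adjmx G = G by rewrite /G adjmx_mul adjmxK.
have [eG v1 v2] := herm_mk hG.
set r' := fun i => complex.Re (eigvals G 0 i) in eG.
have eG2 : G = mk (spectralmx H) (fun i => r i * r i).
  by rewrite /G hH {1 2}eH mk_mul.
have cp := char_poly_mk v1 v2 r'.
rewrite -eG eG2 char_poly_mk // in cp.
have /prod_XsubC_eq pe : \prod_(x <- map (fun i => ((r' i)%:C)%C) (index_enum 'I_n)) ('X - x%:P)
   = \prod_(x <- map (fun i => ((r i * r i)%:C)%C) (index_enum 'I_n)) ('X - x%:P).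
  by rewrite !big_map.
rewrite /trnorm -/G.
have : \sum_(x <- map (fun i => ((r' i)%:C)%C) (index_enum 'I_n)) Num.sqrt (complex.Re x)
   = \sum_(x <- map (fun i => ((r i * r i)%:C)%C) (index_enum 'I_n)) Num.sqrt (complex.Re x).
  exact: perm_big.
rewrite !big_map => -> /=.
by apply: eq_bigr => i _; rewrite -expr2 sqrtr_sqr.
Qed.

Lemma sesq_sum n (M : 'M[C]_n) u w :
  sesq M u w = \sum_a \sum_b u 0 a * M a b * (w 0 b)^*.
Proof.
rewrite /sesq mxE (eq_bigr (fun b => \sum_a u 0 a * M a b * (w 0 b)^* )).
  by rewrite exchange_big.
by move=> b _; rewrite !mxE mulr_suml; by apply: eq_bigr => a _.
Qed.

Lemma reindex1 n (F : 'I_(1 * n) -> C) :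
  \sum_p F p = \sum_a F (mxtens_index (ord0, a)).
Proof.
apply: (reindex (fun a : 'I_n => mxtens_index (ord0, a))).
exists (fun p => (mxtens_unindex p).2) => [a _|p _]; first by rewrite mxtens_indexK.
have := mxtens_unindexK p; case: (mxtens_unindex p) => i a /=.
by rewrite (ord1 i).
Qed.

Lemma cp1 n m (A : 'M[C]_n -> 'M[C]_m) :
  (forall k (X : 'M[C]_(k * n)), psdmx X -> psdmx (ampl A X)) ->
  forall Y, psdmx Y -> psdmx (A Y).
Proof.
move=> cp Y pY v.
pose X : 'M[C]_(1 * n) := \matrix_(p, q) Y (mxtens_unindex p).2 (mxtens_unindex q).2.
have bX : blockmx X ord0 ord0 = Y.
  by apply/matrixP => a b; rewrite !mxE !mxtens_indexK.
have pX : psdmx X.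
  move=> w; pose w' : 'rV[C]_n := \row_a w 0 (mxtens_index (ord0, a)).
  have := pY w'; rewrite -!/(sesq _ _ _) !sesq_sum reindex1.
  congr (0 <= _); apply: eq_bigr => a _; rewrite reindex1.
  by apply: eq_bigr => b _; rewrite !mxE !mxtens_indexK.
have := cp 1%N X pX (\row_p v 0 (mxtens_unindex p).2).
rewrite -!/(sesq _ _ _) !sesq_sum reindex1.
congr (0 <= _); apply: eq_bigr => a _; rewrite reindex1.
apply: eq_bigr => b _; rewrite !mxE !mxtens_indexK /=.
have -> : blockmx X ord0 ord0 = Y by [].
by [].
Qed.

Lemma max0_ge0 (x : R) : 0 <= Num.max x 0.
Proof. by case: (lerP x 0) => // h; rewrite ltW. Qed.

Lemma norm_max (x : R) : `|x| = 2 * Num.max x 0 - x.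
Proof.
by case: (lerP x 0) => h; [rewrite ler0_norm //; lra | rewrite gtr0_norm //; lra].
Qed.

Lemma max_diff (x : R) : Num.max x 0 - Num.max (- x) 0 = x.
Proof.
by case: (lerP x 0) => h; [rewrite max_l ?oppr_ge0 //; lra | rewrite max_r ?oppr_le0 ?ltW //; lra].
Qed.

Lemma tr_herm n (H : 'M[C]_n) : adjmx H = H ->
  complex.Re (\tr H) = \sum_i complex.Re (eigvals H 0 i).
Proof.
move=> hH; have [eH u1 u2] := herm_mk hH.
by rewrite {1}eH mk_tr.
Qed.

Lemma trnorm_trpos n (H : 'M[C]_n) : adjmx H = H ->
  trnorm H = 2 * trpos H - complex.Re (\tr H).
Proof.
move=> hH; rewrite trnorm_herm // tr_herm // /trpos mulr_sumr -sumrB.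
by apply: eq_bigr => i _; rewrite norm_max.
Qed.

Lemma trpos_ge0 n (H : 'M[C]_n) : 0 <= trpos H.
Proof. by apply: sumr_ge0 => i _; apply: max0_ge0. Qed.

Lemma trpos_Pi n (H : 'M[C]_n) : adjmx H = H ->
  exists Pi : 'M[C]_n, [/\ psdmx Pi, psdmx (1%:M - Pi) &
     complex.Re (\tr (Pi *m H)) = trpos H].
Proof.
move=> hH; have [eH u1 u2] := herm_mk hH.
set r := fun i => complex.Re (eigvals H 0 i) in eH.
set P := spectralmx H in eH u1 u2.
pose ind i : R := if 0 < r i then 1 else 0.
exists (mk P ind); split.
- by apply: mk_psd => // i; rewrite /ind; case: ifP.
- rewrite -{1}(mk_one u2) mk_opp mk_add.
  by apply: mk_psd => // i; rewrite /ind; case: ifP; rewrite ?subrr ?subr0.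
- rewrite [X in _ *m X]eH mk_mul // mk_tr // ReR /trpos.
  apply: eq_bigr => i _; rewrite /ind -/(r i).
  case: ifP => h; first by rewrite mul1r max_l // ltW.
  by rewrite mul0r max_r // leNgt h.
Qed.

Lemma trpos0_le n (H M : 'M[C]_n) : adjmx H = H -> trpos H = 0 -> psdmx M ->
  complex.Re (\tr (M *m H)) <= 0.
Proof.
move=> hH h0 pM; have [eH u1 u2] := herm_mk hH.
set r := fun i => complex.Re (eigvals H 0 i) in eH.
have rle : forall i, r i <= 0.
  move=> i; have := @psumr_eq0P _ _ xpredT (fun i => Num.max (r i) 0) (fun i _ => max0_ge0 _) h0 i isT.
  by move=> /= hm; rewrite -hm le_max lexx.
rewrite [X in _ *m X]eH tr_mul_mk Re_sum; apply: sumr_le0 => i _.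
rewrite mulrC ReRM; apply: mulr_le0_ge0 => //.
exact: Re_ge0 (pM _).
Qed.

Lemma mk_ext n (P : 'M[C]_n) f g : f =1 g -> mk P f = mk P g.
Proof.
move=> fg; rewrite /mk /rv; congr (_ *m diag_mx _ *m _).
by apply/matrixP => i j; rewrite !mxE fg.
Qed.

Lemma jordan n (H : 'M[C]_n) : adjmx H = H -> 0 < trpos H ->
  complex.Re (\tr H) = 0 ->
  exists w1 w2 : 'M[C]_n, [/\ is_state w1, is_state w2 &
    H = ((trpos H)%:C)%C *: w1 - ((trpos H)%:C)%C *: w2 ].
Proof.
move=> hH tp tr0; have [eH u1 u2] := herm_mk hH.
have sr := tr0; rewrite tr_herm // in sr.
set r := fun i => complex.Re (eigvals H 0 i) in eH sr.
set P := spectralmx H in eH u1 u2.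
set t := trpos H.
have tE : t = \sum_i Num.max (r i) 0 by [].
have t0 : t != 0 by rewrite gt_eqF.
exists (mk P (fun i => Num.max (r i) 0 / t)), (mk P (fun i => Num.max (- r i) 0 / t)).
split.
- split; first by apply: mk_psd => i; rewrite divr_ge0 ?max0_ge0 ?ltW.
  by rewrite mk_tr // -mulr_suml -tE mulfV.
- split; first by apply: mk_psd => i; rewrite divr_ge0 ?max0_ge0 ?ltW.
  rewrite mk_tr // -mulr_suml.
  have -> : \sum_i Num.max (- r i) 0 = t - \sum_i r i.
    rewrite tE -sumrB; apply: eq_bigr => i _.
    by have := max_diff (r i); lra.
  by rewrite sr subr0 mulfV.
- rewrite !mk_scale mk_opp mk_add {1}eH; apply: mk_ext => i /=.
  by rewrite !(mulrC t) !divfK // max_diff.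
Qed.

Lemma conjRC (c : R) : (((c%:C)%C : C)^*) = (c%:C)%C.
Proof. by apply/eqP; rewrite eq_complex /= oppr0 !eqxx. Qed.

Section Chan.
Variables (n m : nat) (A : 'M[C]_n -> 'M[C]_m).
Hypothesis hA : is_channel A.

Lemma A0 : A 0 = 0.
Proof.
case: hA => lin _ _; have h := lin 1 0 0; rewrite !scale1r addr0 in h.
by apply: (@addrI _ (A 0)); rewrite addr0 -h.
Qed.
Lemma AZ a X : A (a *: X) = a *: A X.
Proof. by case: hA => lin _ _; have := lin a X 0; rewrite !addr0 A0 addr0. Qed.
Lemma AB X Y : A (X - Y) = A X - A Y.
Proof.
case: hA => lin _ _; have := lin (-1) Y X.
by rewrite !scaleN1r addrC => ->; rewrite addrC.
Qed.
Lemma Apsd X : psdmx X -> psdmx (A X).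
Proof. by case: hA => _ cp _; apply: cp1. Qed.
Lemma Atr X : \tr (A X) = \tr X.
Proof. by case: hA. Qed.
End Chan.

Lemma core n m (eps : R) (A : 'M[C]_n -> 'M[C]_m) :
  0 <= eps -> is_channel A -> is_LDP eps A ->
  forall rho sigma, is_state rho -> is_state sigma ->
  trnorm (A rho - A sigma) / trnorm (rho - sigma) <= (expR eps - 1) / (expR eps + 1).
Proof.
move=> he hA ldp rho sigma [pr tr] [ps ts].
set e := expR eps.
have e1 : 1 <= e by have := expR_ge1Dx eps; rewrite -/e; lra.
have c0 : 0 <= (e - 1) / (e + 1) by rewrite divr_ge0 //; lra.
set D := rho - sigma.
have hD : adjmx D = D by rewrite /D adjmxB !psd_herm.
have trD : complex.Re (\tr D) = 0 by rewrite /D raddfB /= tr ts subrr.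
have hr := psd_herm (Apsd hA pr); have hs := psd_herm (Apsd hA ps).
set Y := A rho - A sigma.
have hY : adjmx Y = Y by rewrite /Y adjmxB hr hs.
have trY : complex.Re (\tr Y) = 0 by rewrite /Y raddfB /= !(Atr hA) tr ts subrr.
rewrite !trnorm_trpos // trD trY !subr0.
have [t0|tp] := eqVneq (trpos D) 0.
  by rewrite t0 mulr0 invr0 mulr0.
have {tp} tp : 0 < trpos D by rewrite lt_def tp trpos_ge0.
have [w1 [w2 [[pw1 tw1] [pw2 tw2] eD]]] := jordan hD tp trD.
set t := trpos D in tp eD *.
have hY2 : Y = (t%:C)%C *: A w1 - (t%:C)%C *: A w2.
  by rewrite /Y -(AB hA) -/D eD (AB hA) !(AZ hA).
set al := A w1 in hY2 *; set be := A w2 in hY2 *.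
have hal : adjmx al = al := psd_herm (Apsd hA pw1).
have hbe : adjmx be = be := psd_herm (Apsd hA pw2).
have tal : \tr al = 1 by rewrite (Atr hA).
have tbe : \tr be = 1 by rewrite (Atr hA).
have [Pi [pPi pPi' ePi]] := trpos_Pi hY.
have l1 := ldp w1 w2 (conj pw1 tw1) (conj pw2 tw2).
have l2 := ldp w2 w1 (conj pw2 tw2) (conj pw1 tw1).
rewrite /Egamma -/e -/al -/be in l1 l2.
have h1 : adjmx (al - ((e%:C)%C : C) *: be) = al - (e%:C)%C *: be.
  by rewrite adjmxB adjmxZ conjRC hal hbe.
have h2 : adjmx (be - ((e%:C)%C : C) *: al) = be - (e%:C)%C *: al.
  by rewrite adjmxB adjmxZ conjRC hal hbe.
have q1 := trpos0_le h1 l1 pPi.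
have q2 := trpos0_le h2 l2 pPi'.
set a := complex.Re (\tr (Pi *m al)).
set b := complex.Re (\tr (Pi *m be)).
rewrite mulmxBr -scalemxAr raddfB /= mxtraceZ ReB ReRM -/a -/b in q1.
rewrite mulmxBl mul1mx !mulmxBr -!scalemxAr !raddfB /= !mxtraceZ !ReRM -/a -/b tal tbe in q2.
rewrite -ePi hY2 mulmxBr -!scalemxAr raddfB /= !mxtraceZ ReB !ReRM -/a -/b.
have -> : 2 * (t * a - t * b) / (2 * t) = a - b.
  by field; rewrite gt_eqF.
have e1p : 0 < e + 1 by lra.
have r1 : complex.Re (1 : C) = 1 by [].
rewrite r1 in q2.
rewrite ler_pdivlMr //.
lra.
Qed.

End S.

From mathcomp Require Import boolp.
Unset Implicit Arguments.
Set Strict Implicit.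

Theorem mainTheorem12 (R : realType) (n m : nat) (eps : R)
    (A : 'M[R[i]]_n -> 'M[R[i]]_m) :
  0 <= eps -> is_channel A -> is_LDP eps A ->
  eta_tr A <= (expR eps - 1) / (expR eps + 1).
Proof.
move=> he hA ldp; rewrite /eta_tr.
match goal with |- is_true (?f ?X <= _) => set S := X end.
have ub : forall x, S x -> x <= (expR eps - 1) / (expR eps + 1).
  move=> x [rho [sigma [sr ss _ ->]]]; exact: core.
have [ne|nne] := pselect (S !=set0)%classic.
  exact: ge_sup ne ub.
have -> : S = set0%classic by apply/nonemptyPn.
rewrite sup0 divr_ge0 //.
  by have := expR_ge1Dx eps; lra.
by have := expR_ge0 eps; lra.
Qed.
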